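(* Consider the family of discrete-time load balancing systems described in the context under a throughput optimal Markovian policy, and assume $(\sigma_\Sigma^{(\epsilon)})^2\to\sigma_\Sigma^2$ as $\epsilon\downarrow0$. Then the policy is heavy-traffic delay optimal in steady state (i.e. $\limsup_{\epsilon\downarrow0}\epsilon\,\mathbb{E}[\sum_{n=1}^N\overline{Q}^{(\epsilon)}_n]\le\zeta/2$ with $\zeta=\sigma_\Sigma^2+\nu_\Sigma^2$) if and only if $$\lim_{\epsilon\downarrow0}\mathbb{E}\big[\|\overline{\mathbf{Q}}^{(\epsilon)}(t+1)\|_1\,\|\overline{\mathbf{U}}^{(\epsilon)}(t)\|_1\big]=0 .$$
   Context: Model: a discrete-time system with one dispatcher and $N$ servers; server $n$ has an infinite-buffer FIFO queue of length $Q_n(t)$ at the beginning of slot $t$. Arrivals $A_\Sigma(t)$: integer valued, i.i.d. over $t$, mean $\lambda_\Sigma$, variance $\sigma_\Sigma^2$, $\mathbb{P}(A_\Sigma(t)=0)>0$, $A_\Sigma(t)\le A_{\max}<\infty$. Service $S_n(t)$: integer valued, i.i.d. over $t$, independent across servers and of arrivals, $S_n(t)\le S_{\max}<\infty$, mean $\mu_n$, variance $\nu_n^2$; $\mu_\Sigma=\sum_n\mu_n$, $\nu^2_\Sigma=\sum_n\nu_n^2$. In each slot the arrivals are routed to one queue by a rule depending only on $\mathbf{Q}(t)$; $A_n(t)$ is the number routed to queue $n$. Dynamics: $Q_n(t+1)=Q_n(t)+A_n(t)-S_n(t)+U_n(t)$, $U_n(t)=\max\{S_n(t)-Q_n(t)-A_n(t),0\}$.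 Family indexed by $\epsilon>0$: arrivals $A_\Sigma^{(\epsilon)}(t)$ with mean $\mu_\Sigma-\epsilon$ and variance $(\sigma^{(\epsilon)}_\Sigma)^2$. Throughput optimal: for every $\epsilon>0$ the chain $\{\mathbf{Q}(t)\}$ is positive recurrent and all moments of the stationary $\|\overline{\mathbf{Q}}^{(\epsilon)}\|$ are finite. In the displayed expectation, $\overline{\mathbf{Q}}^{(\epsilon)}(t)$ is distributed according to the stationary distribution, $\overline{\mathbf{U}}^{(\epsilon)}(t)$ is the unused service in slot $t$, and $\overline{\mathbf{Q}}^{(\epsilon)}(t+1)$ is the resulting next state. $\|\mathbf{x}\|_1=\sum_n|x_n|$. *)

(* Defs.v *)
From HB Require Import structures.
From mathcomp Require Import all_boot all_order all_algebra.
From mathcomp Require Import all_classical all_reals all_analysis.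
Import Order.TTheory GRing.Theory Num.Theory.
Import numFieldNormedType.Exports.

Set Implicit Arguments.
Unset Strict Implicit.
Unset Printing Implicit Defensive.

Local Open Scope classical_set_scope.
Local Open Scope ring_scope.

Definition state (N : nat) := {ffun 'I_N -> nat}.

Section LoadBalancing.
Variable R : realType.

Definition is_pmf (M : nat) (p : nat -> R) : Prop :=
  [/\ (forall k, 0 <= p k), (forall k, (M < k)%N -> p k = 0)
    & \sum_(k < M.+1) p k = 1].

Definition pmean (M : nat) (p : nat -> R) : R := \sum_(k < M.+1) k%:R * p k.
Definition pvar (M : nat) (p : nat -> R) : R :=
  \sum_(k < M.+1) (k%:R - pmean M p) ^+ 2 * p k.

Variables (N Amax Smax : nat).

Definition mu_sum (S : 'I_N -> nat -> R) : R := \sum_(n < N) pmean Smax (S n).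
Definition nu2_sum (S : 'I_N -> nat -> R) : R := \sum_(n < N) pvar Smax (S n).

(* A Markovian routing policy: given Q(t), the probability route Q n that the
   arrivals of slot t are all sent to queue n (deterministic rules are the
   special case of 0/1 probabilities). *)
Definition valid_routing (route : state N -> 'I_N -> R) : Prop :=
  forall Q, (forall n, 0 <= route Q n) /\ \sum_(n < N) route Q n = 1.

Definition routed (a : nat) (n m : 'I_N) : nat := if m == n then a else 0%N.

(* U_m(t) = max {S_m(t) - Q_m(t) - A_m(t), 0} *)
Definition unused (Q : state N) (a : nat) (n : 'I_N) (s : 'I_N -> nat)
  (m : 'I_N) : nat := (s m - (Q m + routed a n m))%N.

(* Q_m(t+1) = Q_m(t) + A_m(t) - S_m(t) + U_m(t) (always >= 0) *)
Definition next_state (Q : state N) (a : nat) (n : 'I_N) (s : 'I_N -> nat)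
  : state N := [ffun m => (Q m + routed a n m + unused Q a n s m - s m)%N].

(* Expectation over one slot, starting from state Q, of g(A_Sigma, routed
   queue, service vector), with arrival pmf A and service pmfs S. *)
Definition step_exp (A : nat -> R) (S : 'I_N -> nat -> R)
  (route : state N -> 'I_N -> R) (Q : state N)
  (g : nat -> 'I_N -> ('I_N -> nat) -> R) : R :=
  \sum_(a < Amax.+1) A a * \sum_(n < N) route Q n *
    \sum_(s : {ffun 'I_N -> 'I_Smax.+1})
       (\prod_(m < N) S m (s m)) * g a n (fun m => nat_of_ord (s m)).

Definition trans (A : nat -> R) (S : 'I_N -> nat -> R)
  (route : state N -> 'I_N -> R) (Q Q' : state N) : R :=
  step_exp A S route Q (fun a n s => (next_state Q a n s == Q')%:R).

Definition l1 (Q : state N) : nat := \sum_(m < N) Q m.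

Definition stationary (A : nat -> R) (S : 'I_N -> nat -> R)
  (route : state N -> 'I_N -> R) (pi : state N -> R) : Prop :=
  [/\ (forall Q, 0 <= pi Q),
      (\esum_(Q in [set: state N]) (pi Q)%:E = 1)%E
    & forall Q', ((pi Q')%:E =
        \esum_(Q in [set: state N]) (pi Q * trans A S route Q Q')%:E)%E].

Definition finite_moments (pi : state N -> R) : Prop :=
  forall k : nat,
    (\esum_(Q in [set: state N]) (pi Q * (l1 Q)%:R ^+ k)%:E < +oo)%E.

Definition mean_total (pi : state N -> R) : \bar R :=
  \esum_(Q in [set: state N]) (pi Q * (l1 Q)%:R)%:E.

Definition mean_QU (A : nat -> R) (S : 'I_N -> nat -> R)
  (route : state N -> 'I_N -> R) (pi : state N -> R) : \bar R :=
  \esum_(Q in [set: state N])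
    (pi Q * step_exp A S route Q (fun a n s =>
        (l1 (next_state Q a n s))%:R *
        (\sum_(m < N) unused Q a n s m)%:R))%:E.

End LoadBalancing.

(* Main.v *)
From HB Require Import structures.
From mathcomp Require Import all_boot all_order all_algebra.
From mathcomp Require Import all_classical all_reals all_analysis.
Require Import Defs.
From mathcomp Require Import ring lra zify.
Import Order.TTheory GRing.Theory Num.Theory.
Import numFieldNormedType.Exports.
Local Open Scope classical_set_scope.
Local Open Scope ring_scope.

Section EsumAux.
Variables (R : realType) (T : choiceType).
Local Open Scope ereal_scope.

Lemma esumZl (S : set T) (a : T -> \bar R) (c : R) : (0 <= c)%R ->
  (forall i, 0 <= a i) ->
  \esum_(i in S) (c%:E * a i) = c%:E * \esum_(i in S) a i.
Proof.
move=> c0 a0; rewrite /esum -ereal_supZl//; last first.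
  by apply/set0P; exists 0; exists set0; [exact: fsets_set0|rewrite fsbig_set0].
congr ereal_sup; rewrite image_comp; apply: eq_imagel => A _ /=.
by rewrite ge0_mule_fsumr.
Qed.

Lemma esumZr (S : set T) (a : T -> \bar R) (c : R) : (0 <= c)%R ->
  (forall i, 0 <= a i) ->
  \esum_(i in S) (a i * c%:E) = (\esum_(i in S) a i) * c%:E.
Proof.
move=> c0 a0; rewrite (muleC (esum _ _)) -esumZl//; apply: eq_esum => i _; exact: muleC.
Qed.

Lemma esum_swap (T' : choiceType) (a : T -> T' -> \bar R) :
  (forall i j, 0 <= a i j) ->
  \esum_(i in [set: T]) \esum_(j in [set: T']) a i j =
  \esum_(j in [set: T']) \esum_(i in [set: T]) a i j.
Proof.
move=> a0; rewrite !esum_esum//.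
rewrite (reindex_esum ([set: T'] `*`` (fun=> [set: T])) ([set: T] `*`` (fun=> [set: T'])) (fun x => (x.2, x.1))) //.
split=> //=.
- by move=> [x1 x2] [y1 y2] _ _ /= [-> ->].
- by move=> [x1 x2] _; exists (x2, x1).
Qed.

Lemma esum_ind (Q0 : T) (F : T -> R) : (0 <= F Q0)%R ->
  \esum_(Q in [set: T]) (F Q * (Q0 == Q)%:R)%:E = (F Q0)%:E.
Proof.
move=> F0; rewrite (esumID [set Q0]); last first.
  by move=> i _; case: eqP => [<-|_]; rewrite ?mulr1 ?mulr0 ?lee_fin.
rewrite setTI esum_set1 ?eqxx ?mulr1 ?lee_fin//.
rewrite [X in _ + X]esum1 ?adde0// => i [_ /= ni].
by rewrite (_ : (Q0 == i) = false) ?mulr0//; apply/negbTE/eqP => e; apply: ni.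
Qed.
End EsumAux.

Section Step.
Variables (R : realType) (N Amax Smax : nat).
Variables (A : nat -> R) (S : 'I_N -> nat -> R) (route : state N -> 'I_N -> R).

Definition PS (s : {ffun 'I_N -> 'I_Smax.+1}) : R := \prod_(m < N) S m (s m).

Lemma step_expE Q g : step_exp Amax Smax A S route Q g =
  \sum_(a < Amax.+1) \sum_(n < N) \sum_(s : {ffun 'I_N -> 'I_Smax.+1})
     (A a * route Q n * PS s) * g a n (fun m => nat_of_ord (s m)).
Proof.
rewrite /step_exp; apply: eq_bigr => a _; rewrite mulr_sumr.
apply: eq_bigr => n _; rewrite !mulr_sumr; apply: eq_bigr => s _.
by rewrite /PS !mulrA.
Qed.

Lemma step_exp_ext Q g1 g2 : (forall a n s, g1 a n s = g2 a n s) ->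
  step_exp Amax Smax A S route Q g1 = step_exp Amax Smax A S route Q g2.
Proof.
move=> e; rewrite !step_expE; do 3 (apply: eq_bigr => ? _); by rewrite e.
Qed.

Lemma step_expD Q g1 g2 :
  step_exp Amax Smax A S route Q (fun a n s => g1 a n s + g2 a n s) =
  step_exp Amax Smax A S route Q g1 + step_exp Amax Smax A S route Q g2.
Proof.
rewrite !step_expE -big_split; apply: eq_bigr => a _ /=.
rewrite -big_split; apply: eq_bigr => n _ /=.
rewrite -big_split; apply: eq_bigr => s _ /=; by rewrite mulrDr.
Qed.

Lemma step_expZ Q c g :
  step_exp Amax Smax A S route Q (fun a n s => c * g a n s) =
  c * step_exp Amax Smax A S route Q g.
Proof.
rewrite !step_expE mulr_sumr; apply: eq_bigr => a _ /=.
rewrite mulr_sumr; apply: eq_bigr => n _ /=.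
rewrite mulr_sumr; apply: eq_bigr => s _ /=; by rewrite mulrCA.
Qed.

Hypothesis A0 : forall k, 0 <= A k.
Hypothesis S0 : forall n k, 0 <= S n k.
Hypothesis route0 : forall Q n, 0 <= route Q n.
Hypothesis route1 : forall Q, \sum_(n < N) route Q n = 1.

Lemma PS_ge0 s : 0 <= PS s.
Proof. by apply: prodr_ge0 => m _. Qed.

Lemma step_exp_ge0 Q g :
  (forall a n (s : {ffun 'I_N -> 'I_Smax.+1}), 0 <= g a n (fun m => nat_of_ord (s m))) ->
  0 <= step_exp Amax Smax A S route Q g.
Proof.
move=> g0; rewrite step_expE; do 3 (apply: sumr_ge0 => ? _).
by rewrite mulr_ge0 ?g0 // !mulr_ge0 ?PS_ge0.
Qed.

Lemma step_exp_le Q g1 g2 :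
  (forall a n (s : {ffun 'I_N -> 'I_Smax.+1}),
     g1 a n (fun m => nat_of_ord (s m)) <= g2 a n (fun m => nat_of_ord (s m))) ->
  step_exp Amax Smax A S route Q g1 <= step_exp Amax Smax A S route Q g2.
Proof.
move=> le12; rewrite -subr_ge0.
have -> : step_exp Amax Smax A S route Q g2 - step_exp Amax Smax A S route Q g1
  = step_exp Amax Smax A S route Q (fun a n s => g2 a n s + (-1) * g1 a n s).
  by rewrite step_expD step_expZ mulN1r.
by apply: step_exp_ge0 => a n s; rewrite mulN1r subr_ge0.
Qed.

Lemma step_exp_fact Q (f : nat -> R) (h : ('I_N -> nat) -> R) :
  step_exp Amax Smax A S route Q (fun a n s => f a * h s) =
  (\sum_(a < Amax.+1) A a * f a) *
  (\sum_(s : {ffun 'I_N -> 'I_Smax.+1}) PS s * h (fun m => nat_of_ord (s m))).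
Proof.
rewrite /step_exp mulr_suml; apply: eq_bigr => a _.
pose H := \sum_(s : {ffun 'I_N -> 'I_Smax.+1}) PS s * h (fun m => nat_of_ord (s m)).
rewrite (eq_bigr (fun n => route Q n * (f a * H))); last first.
  move=> n _; congr (_ * _); rewrite /H mulr_sumr; apply: eq_bigr => s _ /=.
  by rewrite /PS mulrCA.
by rewrite -mulr_suml route1 mul1r mulrA.
Qed.

Lemma Es_prod (w : 'I_N -> nat -> R) :
  \sum_(s : {ffun 'I_N -> 'I_Smax.+1}) PS s * \prod_(m < N) w m (s m) =
  \prod_(m < N) \sum_(j < Smax.+1) S m j * w m j.
Proof.
rewrite bigA_distr_bigA /=; apply: eq_bigr => s _.
by rewrite /PS -big_split.
Qed.


Lemma pvarE M (p : nat -> R) : is_pmf M p ->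
  pvar M p = \sum_(k < M.+1) k%:R ^+ 2 * p k - pmean M p ^+ 2.
Proof.
case=> _ _ p1; rewrite /pvar.
have E x : \sum_(k < M.+1) (k%:R - x) ^+ 2 * p k =
  \sum_(k < M.+1) k%:R ^+ 2 * p k - 2 * x * \sum_(k < M.+1) k%:R * p k
  + x ^+ 2 * \sum_(k < M.+1) p k.
  rewrite !mulr_sumr -sumrB -big_split; apply: eq_bigr => k _ /=; ring.
by rewrite E p1 -/(pmean M p); ring.
Qed.

Lemma pmf_sum1 M (p : nat -> R) : is_pmf M p -> \sum_(k < M.+1) p k * 1 = 1.
Proof. by case=> _ _ p1; rewrite -[RHS]p1; apply: eq_bigr => k _; rewrite mulr1. Qed.

Definition wi (m0 m : 'I_N) (j : nat) : R := if m == m0 then j%:R else 1.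

Lemma prod_wi m0 (s : 'I_N -> nat) : \prod_(m < N) wi m0 m (s m) = (s m0)%:R.
Proof.
rewrite (bigD1 m0) //= big1 ?mulr1 /wi ?eqxx // => m /negbTE ->; done.
Qed.

Hypothesis Spmf : forall n, is_pmf Smax (S n).

Lemma Es_pair m1 m2 :
  \sum_(s : {ffun 'I_N -> 'I_Smax.+1}) PS s * ((s m1)%:R * (s m2)%:R) =
  if m1 == m2 then \sum_(j < Smax.+1) S m1 j * j%:R ^+ 2
  else pmean Smax (S m1) * pmean Smax (S m2).
Proof.
rewrite (eq_bigr (fun s : {ffun 'I_N -> 'I_Smax.+1} =>
   PS s * \prod_(m < N) (wi m1 m (s m) * wi m2 m (s m)))); last first.
  by move=> s _; rewrite big_split /= !prod_wi.
rewrite (Es_prod (fun m j => wi m1 m j * wi m2 m j)) (bigD1 m1) //=.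
have one m : \sum_(j < Smax.+1) S m j * 1 = 1 by exact: pmf_sum1.
case: eqP => [<-|/eqP n12].
  rewrite [X in _ * X]big1 ?mulr1; last first.
    by move=> m /negbTE nm; rewrite /wi nm mulr1 one.
  by apply: eq_bigr => j _; rewrite /wi eqxx expr2.
rewrite (bigD1 m2) /=; last by rewrite eq_sym.
rewrite [X in _ * (_ * X)]big1 ?mulr1; last first.
  by move=> m /andP[/negbTE n1 /negbTE n2]; rewrite /wi n1 n2 mulr1 one.
have n21 : (m2 == m1) = false by rewrite eq_sym (negbTE n12).
congr (_ * _); rewrite /pmean; apply: eq_bigr => j _;
  rewrite /wi eqxx ?n21 ?(negbTE n12) ?mulr1 ?mul1r mulrC //.
Qed.

Lemma Es1 : \sum_(s : {ffun 'I_N -> 'I_Smax.+1}) PS s * 1 = 1.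
Proof.
have := Es_prod (fun _ _ => 1).
rewrite (eq_bigr (fun s : {ffun 'I_N -> 'I_Smax.+1} => PS s * 1)); last first.
  by move=> s _; rewrite big1.
move=> ->; apply: big1 => m _; exact: pmf_sum1.
Qed.

Lemma Es_single m0 :
  \sum_(s : {ffun 'I_N -> 'I_Smax.+1}) PS s * (s m0)%:R = pmean Smax (S m0).
Proof.
have := Es_prod (wi m0).
rewrite (eq_bigr (fun s : {ffun 'I_N -> 'I_Smax.+1} => PS s * (s m0)%:R)); last first.
  by move=> s _; rewrite (prod_wi m0 (fun m => nat_of_ord (s m))).
move=> ->; rewrite (bigD1 m0) //= [X in _ * X]big1 ?mulr1; last first.
  by move=> m /negbTE nm; rewrite -[RHS](@pmf_sum1 Smax _ (Spmf m)); apply: eq_bigr => j _; rewrite /wi nm.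
by rewrite /pmean; apply: eq_bigr => j _; rewrite /wi eqxx mulrC.
Qed.

Lemma Es_sum :
  \sum_(s : {ffun 'I_N -> 'I_Smax.+1}) PS s * (\sum_(m < N) nat_of_ord (s m))%:R
  = mu_sum Smax S.
Proof.
rewrite /mu_sum -(eq_bigr _ (fun m _ => Es_single m)) exchange_big /=.
by apply: eq_bigr => s _; rewrite natr_sum mulr_sumr.
Qed.

Lemma Es_sq :
  \sum_(s : {ffun 'I_N -> 'I_Smax.+1}) PS s * ((\sum_(m < N) nat_of_ord (s m))%:R ^+ 2)
  = nu2_sum Smax S + mu_sum Smax S ^+ 2.
Proof.
pose mu m := pmean Smax (S m).
pose E2 m := \sum_(j < Smax.+1) S m j * j%:R ^+ 2.
transitivity (\sum_(m1 < N) \sum_(m2 < N)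
   \sum_(s : {ffun 'I_N -> 'I_Smax.+1}) PS s * ((s m1)%:R * (s m2)%:R)).
  rewrite (eq_bigr (fun s : {ffun 'I_N -> 'I_Smax.+1} => \sum_(m1 < N) \sum_(m2 < N)
     PS s * ((s m1)%:R * (s m2)%:R))); last first.
    move=> s _; rewrite natr_sum expr2 mulr_suml mulr_sumr; apply: eq_bigr => m1 _.
    by rewrite mulr_sumr mulr_sumr.
  rewrite exchange_big /=; apply: eq_bigr => m1 _; by rewrite exchange_big.
under eq_bigr do under eq_bigr do rewrite Es_pair.
have H (m1 : 'I_N) : \sum_(m2 < N) (if m1 == m2 then E2 m1 else mu m1 * mu m2)
   = \sum_(m2 < N) mu m1 * mu m2 + (E2 m1 - mu m1 ^+ 2).
  rewrite (bigD1 m1) //= [in RHS](bigD1 m1) //= eqxx.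
  rewrite (eq_bigr (fun m2 => mu m1 * mu m2)); last first.
    by move=> m2 /negbTE; rewrite eq_sym => ->.
  rewrite expr2; ring.
rewrite (eq_bigr _ (fun m1 _ => H m1)).
rewrite big_split /= addrC /nu2_sum /mu_sum; congr (_ + _).
  by apply: eq_bigr => m _; rewrite pvarE // /E2 -/(mu m); congr (_ - _);
    apply: eq_bigr => j _; rewrite mulrC.
by rewrite expr2 mulr_suml; apply: eq_bigr => m _; rewrite mulr_sumr.
Qed.

End Step.

Section PerQ.
Variables (R : realType) (N Amax Smax : nat).
Variables (A : nat -> R) (S : 'I_N -> nat -> R) (route : state N -> 'I_N -> R).

Lemma sum_routed a n : (\sum_(m < N) routed a n m)%N = a.
Proof.
rewrite (bigD1 n) //= big1 ?addn0 /routed ?eqxx // => m /negbTE -> //.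
Qed.

Lemma next_l1 (Q : state N) a n (s : 'I_N -> nat) :
  (l1 (next_state Q a n s) + \sum_(m < N) s m =
   l1 Q + a + \sum_(m < N) unused Q a n s m)%N.
Proof.
have H m : (next_state Q a n s m + s m = Q m + routed a n m + unused Q a n s m)%N.
  rewrite /next_state ffunE /unused; lia.
rewrite /l1 -big_split /= (eq_bigr _ (fun m _ => H m)) !big_split /= sum_routed //.
Qed.

Definition sigS (s : 'I_N -> nat) : R := (\sum_(m < N) s m)%:R.

Notation SE := (step_exp Amax Smax A S route).

Hypothesis Apmf : is_pmf Amax A.
Hypothesis Spmf : forall n, is_pmf Smax (S n).
Hypothesis Hroute : valid_routing route.

Let A0 k : 0 <= A k. Proof. by case: Apmf. Qed.
Let S0 n k : 0 <= S n k. Proof. by case: (Spmf n). Qed.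
Let route0 Q n : 0 <= route Q n. Proof. by case: (Hroute Q) => h _; exact: h. Qed.
Let route1 Q : \sum_(n < N) route Q n = 1. Proof. by case: (Hroute Q). Qed.

Lemma EA1 : \sum_(a < Amax.+1) A a * 1 = 1.
Proof. exact: pmf_sum1. Qed.
Lemma EAm : \sum_(a < Amax.+1) A a * a%:R = pmean Amax A.
Proof. by apply: eq_bigr => a _; rewrite mulrC. Qed.
Lemma EA2 : \sum_(a < Amax.+1) A a * (a%:R ^+ 2) = pvar Amax A + pmean Amax A ^+ 2.
Proof. by rewrite pvarE // subrK; apply: eq_bigr => a _; rewrite mulrC. Qed.

Lemma SE1 Q : SE Q (fun _ _ _ => 1) = 1.
Proof.
transitivity (SE Q (fun a n s => (fun _ : nat => 1) a * (fun _ : 'I_N -> nat => (1:R)) s)).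
  by apply: step_exp_ext => *; rewrite mul1r.
by rewrite step_exp_fact // EA1 (@Es1 _ _ _ _ Spmf) mul1r.
Qed.

Lemma SEsig Q : SE Q (fun _ _ s => sigS s) = mu_sum Smax S.
Proof.
transitivity (SE Q (fun a n s => (fun _ : nat => 1) a * sigS s)).
  by apply: step_exp_ext => *; rewrite mul1r.
by rewrite step_exp_fact // EA1 mul1r /sigS (@Es_sum _ _ _ _ Spmf).
Qed.

Lemma SEsig2 Q : SE Q (fun _ _ s => sigS s ^+ 2) = nu2_sum Smax S + mu_sum Smax S ^+ 2.
Proof.
transitivity (SE Q (fun a n s => (fun _ : nat => 1) a * (fun s => sigS s ^+ 2) s)).
  by apply: step_exp_ext => *; rewrite mul1r.
by rewrite step_exp_fact // EA1 mul1r /sigS (@Es_sq _ _ _ _ Spmf).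
Qed.

Lemma step_poly Q c0 c1 c2 c3 c4 c5 :
  SE Q (fun a n s => c0 * (1 * 1) + (c1 * (a%:R * 1) + (c2 * (1 * sigS s) +
     (c3 * (a%:R ^+ 2 * 1) + (c4 * (a%:R * sigS s) + c5 * (1 * sigS s ^+ 2)))))) =
  c0 + c1 * pmean Amax A + c2 * mu_sum Smax S + c3 * (pvar Amax A + pmean Amax A ^+ 2)
  + c4 * (pmean Amax A * mu_sum Smax S) + c5 * (nu2_sum Smax S + mu_sum Smax S ^+ 2).
Proof.
rewrite !step_expD !step_expZ SE1 SEsig SEsig2 !step_exp_fact //.
rewrite EAm EA2 /sigS /= (@Es1 _ _ _ _ Spmf) (@Es_sum _ _ _ _ Spmf).
ring.
Qed.


Definition qn (Q : state N) (a : nat) (n : 'I_N) (s : 'I_N -> nat) : R := (l1 (next_state Q a n s))%:R.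
Definition uu (Q : state N) (a : nat) (n : 'I_N) (s : 'I_N -> nat) : R := (\sum_(m < N) unused Q a n s m)%:R.

Lemma qn_eq Q a n s : qn Q a n s = (l1 Q)%:R + a%:R + uu Q a n s - sigS s.
Proof.
have := next_l1 Q a n s; move/(congr1 (fun x => x%:R : R)).
rewrite /qn /uu /sigS !natrD => e; lra.
Qed.

Let mA := pmean Amax A.
Let mS := mu_sum Smax S.

Lemma I1 Q : SE Q (fun a n s => (l1 (next_state Q a n s))%:R) + (mS - mA)
  = (l1 Q)%:R + SE Q (fun a n s => (\sum_(m < N) unused Q a n s m)%:R).
Proof.
set q := (l1 Q)%:R.
rewrite (@step_exp_ext _ _ _ _ _ _ _ Q _ (fun a n s =>
  (q * (1 * 1) + (1 * (a%:R * 1) + ((-1) * (1 * sigS s) +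
     (0 * (a%:R ^+ 2 * 1) + (0 * (a%:R * sigS s) + 0 * (1 * sigS s ^+ 2)))))) +
  uu Q a n s)); last first.
  by move=> a n s; rewrite -/(qn Q a n s) qn_eq /q; ring.
rewrite step_expD step_poly /uu /mA /mS; ring.
Qed.

Lemma I2 Q : SE Q (fun a n s => (l1 (next_state Q a n s))%:R ^+ 2)
  + 2 * (mS - mA) * (l1 Q)%:R
  + SE Q (fun a n s => (\sum_(m < N) unused Q a n s m)%:R ^+ 2)
  = (l1 Q)%:R ^+ 2 + (pvar Amax A + nu2_sum Smax S + (mS - mA) ^+ 2)
  + 2 * SE Q (fun a n s => (l1 (next_state Q a n s))%:R *
                           (\sum_(m < N) unused Q a n s m)%:R).
Proof.
set q := (l1 Q)%:R.
rewrite (@step_exp_ext _ _ _ _ _ _ _ Q _ (fun a n s =>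
  (q ^+ 2 * (1 * 1) + ((2 * q) * (a%:R * 1) + ((-2 * q) * (1 * sigS s) +
     (1 * (a%:R ^+ 2 * 1) + ((-2) * (a%:R * sigS s) + 1 * (1 * sigS s ^+ 2)))))) +
  (2 * (qn Q a n s * uu Q a n s) + (-1) * uu Q a n s ^+ 2))); last first.
  by move=> a n s; rewrite -/(qn Q a n s) qn_eq /q; ring.
rewrite step_expD step_poly step_expD !step_expZ /qn /uu /mA /mS; ring.
Qed.

Lemma I3 Q : SE Q (fun a n s => (\sum_(m < N) unused Q a n s m)%:R ^+ 2)
  <= (N * Smax)%:R * SE Q (fun a n s => (\sum_(m < N) unused Q a n s m)%:R).
Proof.
rewrite -step_expZ; apply: step_exp_le => // a n s.
set u := (\sum_(m < N) unused Q a n (fun m => nat_of_ord (s m)) m)%N.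
have hu : (u <= N * Smax)%N.
  rewrite /u -[X in (_ <= X * _)%N]card_ord -sum_nat_const; apply: leq_sum => m _.
  rewrite /unused; have := ltn_ord (s m); lia.
rewrite expr2 ler_wpM2r // ler_nat //.
Qed.

End PerQ.

Section Flat.
Variables (R : realType) (N Amax Smax : nat).
Variables (A : nat -> R) (S : 'I_N -> nat -> R) (route : state N -> 'I_N -> R).
Notation SE := (step_exp Amax Smax A S route).
Definition XT := ('I_Amax.+1 * ('I_N * {ffun 'I_N -> 'I_Smax.+1}))%type.
Definition wt (Q : state N) (x : XT) : R := A x.1 * route Q x.2.1 * @PS R N Smax S x.2.2.

Lemma step_expF Q g : SE Q g =
  \sum_(x : XT) wt Q x * g x.1 x.2.1 (fun m => nat_of_ord (x.2.2 m)).
Proof.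
rewrite step_expE.
rewrite (eq_bigr (fun a : 'I_Amax.+1 => \sum_(p : 'I_N * {ffun 'I_N -> 'I_Smax.+1})
   A a * route Q p.1 * @PS R N Smax S p.2 * g a p.1 (fun m => nat_of_ord (p.2 m)))); last first.
  by move=> a _; rewrite pair_big.
by rewrite pair_big.
Qed.
End Flat.

Section Global.
Variables (R : realType) (N Amax Smax : nat).
Variables (A : nat -> R) (S : 'I_N -> nat -> R) (route : state N -> 'I_N -> R).
Variable pi : state N -> R.
Notation SE := (step_exp Amax Smax A S route).
Notation WT := (@wt R N Amax Smax A S route).
Local Open Scope ereal_scope.

Hypothesis Apmf : is_pmf Amax A.
Hypothesis Spmf : forall n, is_pmf Smax (S n).
Hypothesis Hroute : valid_routing route.
Hypothesis Hstat : stationary Amax Smax A S route pi.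

Let A0 k : (0 <= A k)%R. Proof. by case: Apmf. Qed.
Let S0 n k : (0 <= S n k)%R. Proof. by case: (Spmf n). Qed.
Let route0 Q n : (0 <= route Q n)%R. Proof. by case: (Hroute Q) => h _; exact: h. Qed.
Let pi0 Q : (0 <= pi Q)%R. Proof. by case: Hstat. Qed.

Lemma wt_ge0 Q x : (0 <= WT Q x)%R.
Proof. by rewrite /wt !mulr_ge0 // PS_ge0. Qed.

Lemma SE_ge0 Q g :
  (forall a n (s : {ffun 'I_N -> 'I_Smax.+1}), 0 <= g a n (fun m => nat_of_ord (s m)))%R ->
  (0 <= SE Q g)%R.
Proof. by move=> h; apply: step_exp_ge0. Qed.

Definition E (h : state N -> R) := \esum_(Q in [set: state N]) (pi Q * h Q)%:E.

Lemma ED h1 h2 : (forall Q, 0 <= h1 Q)%R -> (forall Q, 0 <= h2 Q)%R ->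
  E (fun Q => h1 Q + h2 Q)%R = E h1 + E h2.
Proof.
move=> h10 h20; rewrite /E -esumD; last 2 first.
- by move=> Q _; rewrite lee_fin mulr_ge0.
- by move=> Q _; rewrite lee_fin mulr_ge0.
by apply: eq_esum => Q _; rewrite mulrDr EFinD.
Qed.

Lemma EZ c h : (0 <= c)%R -> (forall Q, 0 <= h Q)%R ->
  E (fun Q => c * h Q)%R = c%:E * E h.
Proof.
move=> c0 h0; rewrite /E -esumZl //; last by move=> Q; rewrite lee_fin mulr_ge0.
by apply: eq_esum => Q _; rewrite -EFinM mulrCA.
Qed.

Lemma E1 : E (fun _ => 1%R) = 1.
Proof.
case: Hstat => _ H _; rewrite -H /E; apply: eq_esum => Q _; by rewrite mulr1.
Qed.

Lemma Econst c : (0 <= c)%R -> E (fun _ => c) = c%:E.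
Proof.
move=> c0; rewrite -[c%:E]mule1 -E1 -EZ //; apply: eq_esum => Q _; by rewrite mulr1.
Qed.

Lemma Ele h1 h2 : (forall Q, h1 Q <= h2 Q)%R -> E h1 <= E h2.
Proof.
move=> h12; apply: le_esum => Q _; rewrite lee_fin ler_wpM2l //.
Qed.

Lemma trans_ge0 Q Q' : (0 <= trans Amax Smax A S route Q Q')%R.
Proof. by apply: SE_ge0 => a n s; rewrite ler0n. Qed.

Lemma inner Q (f : state N -> R) : (forall Q, 0 <= f Q)%R ->
  \esum_(Q' in [set: state N]) (pi Q * trans Amax Smax A S route Q Q' * f Q')%:E
  = (pi Q * SE Q (fun a n s => f (next_state Q a n s)))%:E.
Proof.
move=> f0.
pose nx (x : XT N Amax Smax) := next_state Q x.1 x.2.1 (fun m => nat_of_ord (x.2.2 m)).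
have E1 Q' : (pi Q * trans Amax Smax A S route Q Q' * f Q')%:E =
  \sum_(x : XT N Amax Smax) ((pi Q * WT Q x * f Q') * (nx x == Q')%:R)%:E.
  rewrite sumEFin /trans step_expF mulr_sumr mulr_suml; congr EFin.
  by apply: eq_bigr => x _; rewrite /nx; ring.
rewrite (eq_esum (fun Q' _ => E1 Q')) esum_sum; last first.
  move=> Q' x _ _; rewrite lee_fin; apply: mulr_ge0; last exact: ler0n.
  by rewrite mulr_ge0 ?f0 // mulr_ge0 ?pi0 ?wt_ge0.
rewrite (eq_bigr (fun x => ((pi Q * WT Q x) * f (nx x))%:E)); last first.
  move=> x _; rewrite (@esum_ind _ _ (nx x) (fun Q' => (pi Q * WT Q x * f Q')%R)) //.
  by rewrite mulr_ge0 ?f0 // mulr_ge0 ?pi0 ?wt_ge0.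
rewrite sumEFin step_expF mulr_sumr; congr EFin; apply: eq_bigr => x _.
by rewrite /nx mulrA.
Qed.

Lemma stat_transfer (f : state N -> R) : (forall Q, 0 <= f Q)%R ->
  E f = E (fun Q => SE Q (fun a n s => f (next_state Q a n s))).
Proof.
move=> f0; rewrite /E.
transitivity (\esum_(Q' in [set: state N])
   (\esum_(Q in [set: state N]) (pi Q * trans Amax Smax A S route Q Q')%:E) * (f Q')%:E).
  apply: eq_esum => Q' _; case: Hstat => _ _ H; by rewrite -H EFinM.
transitivity (\esum_(Q' in [set: state N]) \esum_(Q in [set: state N])
   (pi Q * trans Amax Smax A S route Q Q' * f Q')%:E).
  apply: eq_esum => Q' _; rewrite -esumZr //; last first.
    by move=> Q; rewrite lee_fin mulr_ge0 // trans_ge0.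
rewrite esum_swap; last first.
  by move=> Q' Q; rewrite lee_fin !mulr_ge0 // trans_ge0.
by apply: eq_esum => Q _; rewrite inner.
Qed.


Hypothesis Hmom : finite_moments pi.

Lemma Efin_ge0 (h : state N -> R) : (forall Q, 0 <= h Q)%R ->
  E h < +oo -> exists r : R, E h = r%:E /\ (0 <= r)%R.
Proof.
move=> h0 hlt; have ge0 : 0 <= E h by apply: esum_ge0 => Q _; rewrite lee_fin mulr_ge0.
move: ge0 hlt; case: (E h) => [r| |] //= r0 _; exists r; by split => //; rewrite -lee_fin.
Qed.

Lemma Emom k : exists r : R, E (fun Q => (l1 Q)%:R ^+ k)%R = r%:E /\ (0 <= r)%R.
Proof. apply: Efin_ge0; last exact: Hmom. by move=> Q; rewrite exprn_ge0. Qed.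

Definition Uf (Q : state N) : R := SE Q (fun a n s => (\sum_(m < N) unused Q a n s m)%:R)%R.
Definition U2f (Q : state N) : R := SE Q (fun a n s => (\sum_(m < N) unused Q a n s m)%:R ^+ 2)%R.
Definition Wf (Q : state N) : R := SE Q (fun a n s => (l1 (next_state Q a n s))%:R *
                           (\sum_(m < N) unused Q a n s m)%:R)%R.

Let mA := pmean Amax A.
Let mS := mu_sum Smax S.
Hypothesis Heps : (mA < mS)%R.

Lemma EU1 : E Uf = (mS - mA)%:E.
Proof.
have e0 : (0 <= mS - mA)%R by rewrite subr_ge0 ltW.
have H : E (fun Q => SE Q (fun a n s => (l1 (next_state Q a n s))%:R) + (mS - mA))%R
       = E (fun Q => (l1 Q)%:R + Uf Q)%R.
  by apply: eq_esum => Q _; rewrite (@I1 _ _ _ _ _ _ _ Apmf Spmf Hroute).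
have V1eq : E (fun Q => SE Q (fun a n s => (l1 (next_state Q a n s))%:R)%R)
   = E (fun Q => (l1 Q)%:R)%R.
  by rewrite [RHS]stat_transfer // => Q; rewrite ler0n.
have hV1 Q : (0 <= SE Q (fun a n s => (l1 (next_state Q a n s))%:R))%R.
  by apply: SE_ge0 => *; rewrite ler0n.
have hU Q : (0 <= Uf Q)%R by apply: SE_ge0 => *; rewrite ler0n.
rewrite ED in H; [|exact: hV1|by move=> Q].
rewrite Econst // in H.
rewrite [X in _ = X]ED in H; [|by move=> Q; rewrite ler0n|exact: hU].
rewrite V1eq in H.
have [mq [Emq _]] := Emom 1.
have Eq1 : E (fun Q => (l1 Q)%:R)%R = mq%:E.
  by rewrite -Emq; apply: eq_esum => Q _; rewrite expr1.
rewrite Eq1 in H.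
have : 0 <= E Uf by apply: esum_ge0 => Q _; rewrite lee_fin mulr_ge0.
move: H; case: (E Uf) => [u| |] //=.
  by rewrite -EFinD -EFinD => -[e] _; congr EFin; lra.
Qed.


Lemma key : exists x u2 mq : R,
  [/\ E Wf = x%:E, E (fun Q => (l1 Q)%:R)%R = mq%:E, (0 <= x)%R,
   (0 <= u2 <= (N * Smax)%:R * (mS - mA))%R &
   (2 * (mS - mA) * mq + u2 = pvar Amax A + nu2_sum Smax S + (mS - mA) ^+ 2 + 2 * x)%R].
Proof.
have e0 : (0 <= mS - mA)%R by rewrite subr_ge0 ltW.
pose V2 Q := SE Q (fun a n s => (l1 (next_state Q a n s))%:R ^+ 2)%R.
pose K := (pvar Amax A + nu2_sum Smax S + (mS - mA) ^+ 2)%R.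
have K0 : (0 <= K)%R.
  rewrite /K !addr_ge0 ?sqr_ge0 //.
    rewrite /pvar; apply: sumr_ge0 => k _; rewrite mulr_ge0 ?sqr_ge0 //.
  rewrite /nu2_sum; apply: sumr_ge0 => m _; rewrite /pvar; apply: sumr_ge0 => k _.
  by rewrite mulr_ge0 ?sqr_ge0 //.
have hV2 Q : (0 <= V2 Q)%R by apply: SE_ge0 => *; rewrite exprn_ge0 // ler0n.
have hU Q : (0 <= Uf Q)%R by apply: SE_ge0 => *; rewrite ler0n.
have hU2 Q : (0 <= U2f Q)%R by apply: SE_ge0 => *; rewrite exprn_ge0 // ler0n.
have hW Q : (0 <= Wf Q)%R by apply: SE_ge0 => *; rewrite mulr_ge0 // ler0n.
have hq Q : (0 <= (l1 Q)%:R :> R)%R by rewrite ler0n.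
have hq2 Q : (0 <= (l1 Q)%:R ^+ 2 :> R)%R by rewrite exprn_ge0.
have H : E (fun Q => V2 Q + 2 * (mS - mA) * (l1 Q)%:R + U2f Q)%R
       = E (fun Q => (l1 Q)%:R ^+ 2 + K + 2 * Wf Q)%R.
  by apply: eq_esum => Q _; rewrite (@I2 _ _ _ _ _ _ _ Apmf Spmf Hroute).
have h2q Q : (0 <= 2 * (mS - mA) * (l1 Q)%:R)%R by rewrite !mulr_ge0.
rewrite ED in H; [|by move=> Q; rewrite addr_ge0|exact: hU2].
rewrite ED in H; [|exact: hV2|exact: h2q].
rewrite EZ in H; [|by rewrite mulr_ge0|exact: hq].
rewrite [X in _ = X]ED in H; [|by move=> Q; rewrite addr_ge0|by move=> Q; rewrite mulr_ge0].
rewrite [X in _ = X + _]ED in H; [|exact: hq2|by move=> Q].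
rewrite Econst // in H.
rewrite [X in _ = _ + X]EZ in H; [|by []|exact: hW].
have V2eq : E V2 = E (fun Q => (l1 Q)%:R ^+ 2)%R.
  by rewrite [RHS]stat_transfer.
rewrite V2eq in H.
have [mq [Emq mq0]] := Emom 1.
have Eq1 : E (fun Q => (l1 Q)%:R)%R = mq%:E.
  by rewrite -Emq; apply: eq_esum => Q _; rewrite expr1.
have [m2 [Em2 _]] := Emom 2.
rewrite Eq1 Em2 in H.
have U2le : E U2f <= ((N * Smax)%:R * (mS - mA))%:E.
  rewrite EFinM -EU1 -EZ //.
  apply: Ele => Q; exact: (@I3 _ _ _ _ _ _ _ Apmf Spmf Hroute).
have [u2 [Eu2 u20]] : exists r : R, E U2f = r%:E /\ (0 <= r)%R.
  apply: Efin_ge0 => //; apply: le_lt_trans U2le _; exact: ltry.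
rewrite Eu2 in H U2le.
have : 0 <= E Wf by apply: esum_ge0 => Q _; rewrite lee_fin mulr_ge0.
move: H; case: (E Wf) => [x| |] //=.
  rewrite -!EFinM -!EFinD => -[e] x0; exists x, u2, mq; split => //.
  - by apply/andP; split => //; rewrite -lee_fin.
  - rewrite /K in e; lra.
rewrite mulry gtr0_sg // mul1e addey // -!EFinM -!EFinD.
Qed.

End Global.

Lemma limit_part (R : realType) (f X : R -> \bar R) (h g : R -> R) (L c d : R) :
  0 < d -> 0 <= c ->
  (forall e, 0 < e < d -> exists x, [/\ X e = x%:E, f e = (h e + x)%:E, 0 <= x
       & `|h e - g e| <= c * e]) ->
  g x @[x --> 0^'+] --> L ->
  ((limf_esup f 0^'+ <= L%:E)%E <-> X x @[x --> 0^'+] --> 0%E).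
Proof.
move=> d0 c0 Hx gL.
have Pnear : \forall e \near 0^'+, 0 < e < d.
  apply: filterS2 (nbhs_right_gt 0) (nbhs_right_lt d0) => e e0 ed.
  by rewrite e0 ed.
have hnear (δ : R) : 0 < δ -> \forall e \near 0^'+, 0 < e < d /\ `|h e - L| < δ.
  move=> δ0.
  have g2 := (proj1 (cvgrPdist_lt _ _) gL) (δ / 2) ltac:(lra).
  have ce : \forall e \near (0:R)^'+, e < δ / (2 * (c + 1)).
    apply: nbhs_right_lt; apply: divr_gt0; lra.
  apply: filterS3 Pnear g2 ce => e ed hg ec; split => //.
  have [x [_ _ _ hb]] := Hx e ed.
  case/andP: ed => e0 ed.
  move: ec; rewrite ltr_pdivlMr; last lra.
  move=> ec.
  have ce2 : c * e < δ / 2 by nra.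
  have := ler_distD (g e) (h e) L.
  rewrite distrC in hg; lra.
split.
- move=> Hsup; apply/fine_cvgP; split.
    apply: filterS Pnear => e ed; have [x [-> _ _ _]] := Hx e ed; by [].
  apply/cvgrPdist_lt => δ δ0.
  have : (limf_esup f 0^'+ < (L + δ / 2)%:E)%E.
    by apply: le_lt_trans Hsup _; rewrite lte_fin; lra.
  move/ereal_inf_lt => [y [V FV <-] yl].
  apply: filterS2 FV (hnear (δ / 2) ltac:(lra)) => e Ve [ed he].
  have [x [Xe fe x0 _]] := Hx e ed.
  have : (f e <= ereal_sup (f @` V))%E by apply: ereal_sup_ubound; exists e.
  move=> /le_lt_trans /(_ yl); rewrite fe lte_fin => hx.
  rewrite /= Xe /= sub0r normrN ger0_norm //.
  move: he; rewrite ltr_norml => /andP[he _]; lra.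
- move=> /fine_cvgP [_ HX]; apply/lee_addgt0Pr => δ δ0.
  have X2 := (proj1 (cvgrPdist_lt _ _) HX) (δ / 2) ltac:(lra).
  have FV : \forall e \near 0^'+, (f e <= (L + δ)%:E)%E.
    apply: filterS2 X2 (hnear (δ / 2) ltac:(lra)) => e hx [ed he].
    have [x [Xe fe x0 _]] := Hx e ed.
    move: hx; rewrite /= Xe /= sub0r normrN ger0_norm // => hx.
    move: he; rewrite ltr_norml => /andP[_ he].
    rewrite fe lee_fin; lra.
  rewrite -EFinD.
  have Hle : (limf_esup f 0^'+ <= ereal_sup (f @` [set e | (f e <= (L + δ)%:E)%E]))%E.
    by rewrite limf_esupE; apply: ereal_inf_lbound; exists [set e | (f e <= (L + δ)%:E)%E].
  apply: le_trans Hle _.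
  by apply: ge_ereal_sup => _ [e fe <-].
Qed.

Theorem lemma3 (R : realType) (N Amax Smax : nat)
  (Aeps : R -> nat -> R) (S : 'I_N -> nat -> R)
  (route : state N -> 'I_N -> R) (pi : R -> state N -> R) (sigma2 : R) :
  (0 < N)%N ->
  (forall n, is_pmf Smax (S n)) ->
  0 < mu_sum Smax S ->
  valid_routing route ->
  (forall eps, 0 < eps < mu_sum Smax S ->
     [/\ is_pmf Amax (Aeps eps), 0 < Aeps eps 0%N
       & pmean Amax (Aeps eps) = mu_sum Smax S - eps]) ->
  (forall eps, 0 < eps < mu_sum Smax S ->
     stationary Amax Smax (Aeps eps) S route (pi eps) /\
     finite_moments (pi eps)) ->
  pvar Amax (Aeps eps) @[eps --> 0^'+] --> sigma2 ->
  ((limf_esup (fun eps : R => (eps%:E * mean_total (pi eps))%E) 0^'+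
      <= ((sigma2 + nu2_sum Smax S) / 2)%:E)%E
   <->
   mean_QU Amax Smax (Aeps eps) S route (pi eps) @[eps --> 0^'+] --> 0%E).
Proof.
move=> N0 Spmf mu0 Hroute HA Hst Hvar.
set mS := mu_sum Smax S.
set C : R := (N * Smax)%:R.
have C0 : 0 <= C by rewrite ler0n.
pose f := fun eps : R => (eps%:E * mean_total (pi eps))%E.
pose X := fun eps : R => mean_QU Amax Smax (Aeps eps) S route (pi eps).
pose g := fun eps : R => (pvar Amax (Aeps eps) + nu2_sum Smax S) / 2.
pose h := fun eps : R => fine (f eps) - fine (X eps).
have gL : g x @[x --> 0^'+] --> (sigma2 + nu2_sum Smax S) / 2.
  apply: cvgMr_tmp; apply: cvgD => //; exact: cvg_cst.
apply: (@limit_part R f X h g _ ((1 + C) / 2) (Num.min mS 1)) => //.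
- by rewrite lt_min mu0 ltr01.
- by apply: divr_ge0 => //; rewrite addr_ge0.
move=> e; rewrite lt_min => /andP[e0 /andP[emS e1]].
have emS' : 0 < e < mu_sum Smax S by rewrite e0 emS.
have [Apmf _ mAe] := HA e emS'.
have [Hstat Hmom] := Hst e emS'.
have Heps : pmean Amax (Aeps e) < mu_sum Smax S by rewrite mAe; lra.
have [x [u2 [mq [EW Eq x0 /andP[u20 u2C] eq]]]] :=
  @key _ _ _ _ _ _ _ _ Apmf Spmf Hroute Hstat Hmom Heps.
have XE : X e = x%:E by rewrite -EW.
have Mq : mean_total (pi e) = mq%:E by rewrite -Eq.
have fE : f e = (e * mq)%:E by rewrite /f Mq EFinM.
exists x; split => //.
- by rewrite /h fE XE /=; congr EFin; ring.
- rewrite /h fE XE /= /g.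
  rewrite mAe in eq u2C.
  have -> : e * mq - x - (pvar Amax (Aeps e) + nu2_sum Smax S) / 2 = (e ^+ 2 - u2) / 2.
    rewrite -[mu_sum Smax S]/mS in eq; rewrite (_ : mS - (mS - e) = e) in eq; last ring.
    lra.
  rewrite -[mu_sum Smax S]/mS (_ : mS - (mS - e) = e) in u2C; last ring.
  have e2 : e ^+ 2 <= e by rewrite expr2 ger_pMl // ltW.
  rewrite ler_norml; apply/andP; split.
    have u2C' : u2 <= C * e by [].
    have := sqr_ge0 e; lra.
  have u2C' : u2 <= C * e by [].
  lra.
Qed.
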